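(* Let $\mathcal{G}$ be a graph with exactly two zealots, with opinions $-1$ and $1$, such that the persuadable subgraph $\mathcal{G}_{\mathcal{P}}$ is $d$-regular for some $d$ and every persuadable node is adjacent to both zealots. Consider the SBCM with parameters $\gamma,\delta\ge0$ and let $\bar{\mathbf{x}}$ be the harmonic state in which every persuadable node has opinion $0$. Let $u=\omega(0)=\frac{1}{1+e^{-\gamma\delta}}$ and $v=\omega(1)=\frac{1}{1+e^{\gamma-\gamma\delta}}$, and let $\mathbf{L}_{\mathcal{P}}$ be the combinatorial Laplacian of $\mathcal{G}_{\mathcal{P}}$. Then the space of unstable directions at $\bar{\mathbf{x}}$ is spanned by the eigenvectors $\mathbf{v}_i$ of $\mathbf{L}_{\mathcal{P}}$ whose eigenvalues $\lambda_i$ satisfy $$\lambda_i\le-\frac{2v\,(1-2\gamma(1-v))}{u}.$$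
   Context: Let $\mathcal{G}$ be a finite undirected unweighted graph without self-loops, adjacency $i\sim j$, with nodes partitioned into zealots $\mathcal{Z}$ and persuadable nodes $\mathcal{P}$; $\mathcal{G}_{\mathcal{P}}$ is the subgraph induced by $\mathcal{P}$, and its combinatorial Laplacian is $\mathbf{D}-\mathbf{A}$ (degree matrix minus adjacency matrix). With $w(x_i,x_j)=\omega(|x_i-x_j|)=\frac{1}{1+e^{\gamma(x_i-x_j)^2-\gamma\delta}}$ for $i\sim j$ and $0$ otherwise, the SBCM is $\frac{dx_i}{dt}=f_i(\mathbf{x})=\frac{\sum_j w(x_i,x_j)(x_j-x_i)}{\sum_j w(x_i,x_j)}$ for $i\in\mathcal{P}$ and $\frac{dx_i}{dt}=0$ for zealots; $\bar{\mathbf{x}}$ is a steady state. The space of unstable directions at a steady state is the span of the eigenvectors of $\mathbf{J}_{\mathcal{P}}=(\partial f_i/\partial x_j)_{i,j\in\mathcal{P}}$ (evaluated there) with nonnegative eigenvalues. *)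

(* Defs.v *)
From HB Require Import structures.
From mathcomp Require Import all_boot all_order all_algebra.
From mathcomp Require Import all_classical all_reals all_analysis.
Set Implicit Arguments. Unset Strict Implicit. Unset Printing Implicit Defensive.
Import Order.TTheory GRing.Theory Num.Theory.
Local Open Scope ring_scope.

Section SBCM.
Variable R : realType.
Variable V : finType.

Definition omega (gamma delta r : R) : R :=
  1 / (1 + expR (gamma * r ^+ 2 - gamma * delta)).

Definition sbcm_w (e : rel V) (gamma delta : R) (x : V -> R) (i j : V) : R :=
  if e i j then omega gamma delta `|x i - x j| else 0.

Definition sbcm_f (e : rel V) (gamma delta : R) (x : V -> R) (i : V) : R :=
  (\sum_j sbcm_w e gamma delta x i j * (x j - x i))
  / (\sum_j sbcm_w e gamma delta x i j).

Definition zealots (z1 z2 : V) : {set V} := [set z1; z2].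
Definition pers (z1 z2 : V) := {v : V | v \notin zealots z1 z2}.

Definition full_state (z1 z2 : V) (y : pers z1 z2 -> R) (v : V) : R :=
  match insub v with
  | Some p => y p
  | None => if v == z1 then -1 else 1
  end.

Definition xbar (z1 z2 : V) : pers z1 z2 -> R := fun _ => 0.

(* Jacobian J_P = (d f_i / d x_j)_{i,j in P} at the state (y on P, zealots fixed);
   the partial derivative is the derivative of t |-> f_i(y + t e_j) at t = 0. *)
Definition jacobianP (e : rel V) (gamma delta : R) (z1 z2 : V)
  (y : pers z1 z2 -> R) (i j : pers z1 z2) : R :=
  derive1 (fun t : R =>
    sbcm_f e gamma delta
      (full_state (fun k => y k + (if k == j then t else 0))) (val i)) 0.

Definition laplacianP (e : rel V) (z1 z2 : V) (i j : pers z1 z2) : R :=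
  (if i == j then (#|[set k : pers z1 z2 | e (val i) (val k)]|)%:R else 0)
  - (if e (val i) (val j) then 1 else 0).

Definition is_eigvec (P : finType) (M : P -> P -> R) (mu : R) (v : P -> R) : Prop :=
  (exists p, v p != 0) /\ (forall p, \sum_q M p q * v q = mu * v p).

Definition in_span (P : finType) (S : (P -> R) -> Prop) (y : P -> R) : Prop :=
  exists (n : nat) (s : 'I_n -> P -> R) (c : 'I_n -> R),
    (forall k, S (s k)) /\ (forall p, y p = \sum_(k < n) c k * s k p).

End SBCM.

(* Main.v *)
Require Import Defs.
From HB Require Import structures.
From mathcomp Require Import all_boot all_order all_algebra.
From mathcomp Require Import all_classical all_reals all_analysis.
From mathcomp Require Import ring lra.
Import Order.TTheory GRing.Theory Num.Theory.
Local Open Scope ring_scope.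

Section Aux.
Variable R : realType.
Variables gamma delta : R.

Definition EE (s : R) := expR (gamma * s ^+ 2 - gamma * delta).
Definition HH (s : R) := (1 + EE s)^-1.
Definition Hd (s : R) := - (1 + EE s)^-2 * (EE s * (gamma * (2 * s))).

Lemma omegaE s : omega gamma delta `|s| = HH s.
Proof. by rewrite /omega /HH /EE div1r real_normK ?num_real. Qed.

Lemma der_aff (s r x : R) : is_derive x (1:R) (fun t => s + t * r) r.
Proof.
have -> : (fun t => s + t * r) = (cst s + r *: id) by apply/funext => t /=; rewrite mulrC.
have := is_deriveD (is_derive_cst s x (1:R)) (is_deriveZ r (is_derive_id x (1:R))).
by rewrite add0r scaler1.
Qed.

Lemma der_H (s r : R) : is_derive (0:R) (1:R) (fun t => HH (s + t * r)) (r * Hd s).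
Proof.
have hA := der_aff s r 0.
have hA2 := is_deriveX 2 hA.
have hQ := is_deriveB (is_deriveZ gamma hA2) (is_derive_cst (gamma * delta) (0:R) (1:R)).
have hE := is_derive1_comp (is_derive_expR _) hQ.
have hG := is_deriveD (is_derive_cst (1:R) (0:R) (1:R)) hE.
have hV := fun h => @is_deriveV R _ 0 _ 1 h hG.
move: hV; set F := (cst 1 + _); move=> hV.
have hne : F 0 != 0.
  rewrite /F !fctE /= mul0r addr0; apply: lt0r_neq0; rewrite ltr_pwDl // expR_gt0.
move: {hV}(hV hne) => hV.
have -> : (fun t => HH (s + t * r)) = (fun y => (F y)^-1).
  by apply/funext => t; rewrite /HH /EE /F !fctE /=.
apply: is_derive_eq.
rewrite /Hd /EE /F !fctE /= !mul0r !addr0 subr0 add0r.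
rewrite expr1 /GRing.scale /=. ring.
Qed.

Lemma Hd0 : Hd 0 = 0.
Proof. by rewrite /Hd !mulr0. Qed.

Lemma HdN s : Hd (- s) = - Hd s.
Proof. by rewrite /Hd /EE sqrrN; ring. Qed.

Lemma HH_pos s : 0 < HH s.
Proof. by rewrite /HH /EE invr_gt0 addr_gt0 // expR_gt0. Qed.

Lemma is_derive_sumF (I : finType) (h : I -> R -> R) (dh : I -> R) :
  (forall k, is_derive (0:R) (1:R) (h k) (dh k)) ->
  is_derive (0:R) (1:R) (fun t => \sum_k h k t) (\sum_k dh k).
Proof.
move=> H.
have -> : (fun t => \sum_k h k t) = \sum_k h k by rewrite fct_sumE.
elim/big_ind2: _ => //.
- exact: is_derive_cst.
- by move=> f df g dg hf hg; apply: is_deriveD.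
Qed.


Variables (V : finType) (e : rel V).

Definition Xs (x0 dv : V -> R) (t : R) := fun l => x0 l + t * dv l.

Lemma Xs0 x0 dv : Xs x0 dv 0 = x0.
Proof. by apply/funext => l; rewrite /Xs mul0r addr0. Qed.

Definition Wd (x0 dv : V -> R) i k :=
  if e i k then (dv i - dv k) * Hd (x0 i - x0 k) else 0.

Lemma der_W (x0 dv : V -> R) i k :
  is_derive (0:R) (1:R) (fun t => sbcm_w e gamma delta (Xs x0 dv t) i k) (Wd x0 dv i k).
Proof.
rewrite /sbcm_w /Wd; case: (e i k); last exact: is_derive_cst.
have -> : (fun t => omega gamma delta `|Xs x0 dv t i - Xs x0 dv t k|)
   = fun t => HH ((x0 i - x0 k) + t * (dv i - dv k)).
  by apply/funext => t; rewrite omegaE /Xs; congr HH; ring.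
exact: der_H.
Qed.

Definition Td (x0 dv : V -> R) i k :=
  sbcm_w e gamma delta x0 i k * (dv k - dv i) + (x0 k - x0 i) * Wd x0 dv i k.

Lemma der_T (x0 dv : V -> R) i k :
  is_derive (0:R) (1:R)
    (fun t => sbcm_w e gamma delta (Xs x0 dv t) i k * (Xs x0 dv t k - Xs x0 dv t i))
    (Td x0 dv i k).
Proof.
have hM := is_deriveM (der_W x0 dv i k) (der_aff (x0 k - x0 i) (dv k - dv i) 0).
have -> : (fun t => sbcm_w e gamma delta (Xs x0 dv t) i k * (Xs x0 dv t k - Xs x0 dv t i))
  = (fun t => sbcm_w e gamma delta (Xs x0 dv t) i k) * (fun t => (x0 k - x0 i) + t * (dv k - dv i)).
  by apply/funext => t; rewrite !fctE /Xs; congr (_ * _); ring.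
apply: is_derive_eq.
rewrite /Td /= Xs0 mul0r addr0 /GRing.scale /=; ring.
Qed.

Definition N0 (x0 : V -> R) i := \sum_k sbcm_w e gamma delta x0 i k * (x0 k - x0 i).
Definition D0 (x0 : V -> R) i := \sum_k sbcm_w e gamma delta x0 i k.

Lemma der_f (x0 dv : V -> R) i :
  N0 x0 i = 0 -> D0 x0 i != 0 ->
  is_derive (0:R) (1:R) (fun t => sbcm_f e gamma delta (Xs x0 dv t) i)
    ((\sum_k Td x0 dv i k) / D0 x0 i).
Proof.
move=> hN hD.
have hNd := @is_derive_sumF V _ _ (fun k => der_T x0 dv i k).
have hDd := @is_derive_sumF V _ _ (fun k => der_W x0 dv i k).
pose F := fun t => \sum_k sbcm_w e gamma delta (Xs x0 dv t) i k.
have hV := fun h => @is_deriveV R F 0 _ 1 h hDd.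
have hne : F 0 != 0 by rewrite /F Xs0.
move: {hV}(hV hne) => hV.
have hM := is_deriveM hNd hV.
have -> : (fun t => sbcm_f e gamma delta (Xs x0 dv t) i) =
  (fun t => \sum_k sbcm_w e gamma delta (Xs x0 dv t) i k * (Xs x0 dv t k - Xs x0 dv t i)) *
  (fun t => (F t)^-1).
  by apply/funext => t; rewrite /sbcm_f /F.
apply: is_derive_eq.
rewrite /= /F Xs0 -/(N0 x0 i) -/(D0 x0 i) hN scale0r add0r /GRing.scale /=.
by rewrite mulrC.
Qed.


Variables (z1 z2 : V).
Hypothesis z12 : z1 != z2.

Definition x0 : V -> R := full_state (@xbar R V z1 z2).
Definition dvj (j : pers z1 z2) : V -> R := fun l => if l == val j then 1 else 0.

Lemma x0_val (p : pers z1 z2) : x0 (val p) = 0.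
Proof.
rewrite /x0 /full_state; case: insubP => [q _ _|]; first by [].
by rewrite (valP p).
Qed.

Lemma x0_z1 : x0 z1 = -1.
Proof.
rewrite /x0 /full_state; case: insubP => [q|]; last by rewrite eqxx.
by rewrite /zealots !inE eqxx.
Qed.

Lemma x0_z2 : x0 z2 = 1.
Proof.
rewrite /x0 /full_state; case: insubP => [q|]; first by rewrite /zealots !inE eqxx orbT.
by rewrite eq_sym (negbTE z12).
Qed.

Lemma dvj_z1 j : dvj j z1 = 0.
Proof.
rewrite /dvj; case: eqP => // h; have := valP j; by rewrite -h /zealots !inE eqxx.
Qed.

Lemma dvj_z2 j : dvj j z2 = 0.
Proof.
rewrite /dvj; case: eqP => // h; have := valP j; by rewrite -h /zealots !inE eqxx orbT.
Qed.

Lemma dvj_val j (p : pers z1 z2) : dvj j (val p) = if p == j then 1 else 0.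
Proof. by rewrite /dvj (inj_eq val_inj). Qed.

Lemma fs_eq j t :
  full_state (fun k => @xbar R V z1 z2 k + (if k == j then t else 0)) = Xs x0 (dvj j) t.
Proof.
apply/funext => l; rewrite /Xs /x0 /dvj /full_state.
case: insubP => [q _ hq|hl].
  rewrite -hq (inj_eq val_inj) !add0r.
  by case: (q == j); rewrite ?mulr1 ?mulr0.
case: (l =P val j) => [h|_]; last by rewrite mulr0 addr0.
by move: hl; rewrite h (valP j).
Qed.

Lemma sum_split (F : V -> R) :
  \sum_k F k = F z1 + F z2 + \sum_(p : pers z1 z2) F (val p).
Proof.
rewrite (bigID (fun k => k \in zealots z1 z2)) /=.
congr (_ + _).
  rewrite /zealots big_setU1 /= ?big_set1 //.
  by rewrite inE.
by rewrite (big_sub (fun k => k \notin zealots z1 z2)).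
Qed.


Variable d : nat.
Hypothesis hd : forall i : pers z1 z2, #|[set k : pers z1 z2 | e (val i) (val k)]| = d.
Hypothesis hz : forall i : pers z1 z2, e (val i) z1 /\ e (val i) z2.

Lemma HHN s : HH (- s) = HH s.
Proof. by rewrite /HH /EE sqrrN. Qed.

Lemma count_sum (i : pers z1 z2) (c : R) :
  \sum_(p : pers z1 z2) (if e (val i) (val p) then c else 0) = c * d%:R.
Proof.
rewrite -big_mkcond /= sumr_const -(hd i) cardsE mulr_natr //.
Qed.

Lemma N0E (i : pers z1 z2) : N0 x0 (val i) = 0.
Proof.
have [h1 h2] := hz i.
rewrite /N0 sum_split big1 => [|p _]; last by rewrite !x0_val subrr mulr0.
rewrite /sbcm_w h1 h2 !x0_val x0_z1 x0_z2 !sub0r opprK !omegaE HHN.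
ring.
Qed.

Lemma D0E (i : pers z1 z2) : D0 x0 (val i) = 2 * HH 1 + d%:R * HH 0.
Proof.
have [h1 h2] := hz i.
rewrite /D0 sum_split.
rewrite (eq_bigr (fun p => if e (val i) (val p) then HH 0 else 0)) => [|p _]; last first.
  by rewrite /sbcm_w !x0_val subrr omegaE.
rewrite count_sum /sbcm_w h1 h2 !x0_val x0_z1 x0_z2 !sub0r opprK !omegaE HHN.
ring.
Qed.

Lemma D0_gt0 (i : pers z1 z2) : 0 < D0 x0 (val i).
Proof.
rewrite D0E; apply: ltr_wpDr; first by apply: mulr_ge0 => //; apply: ltW; apply: HH_pos.
by apply: mulr_gt0 => //; apply: HH_pos.
Qed.

Lemma TdE (i j : pers z1 z2) :
  \sum_k Td x0 (dvj j) (val i) k =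
  - HH 0 * @laplacianP R V e z1 z2 i j - 2 * (HH 1 + Hd 1) * (if i == j then 1 else 0).
Proof.
have [h1 h2] := hz i.
have hp : forall p : pers z1 z2, Td x0 (dvj j) (val i) (val p) =
   (if e (val i) (val p) then HH 0 * dvj j (val p) else 0)
   - (if e (val i) (val p) then HH 0 else 0) * dvj j (val i).
  move=> p; rewrite /Td /Wd /sbcm_w !x0_val !subrr mul0r addr0 omegaE.
  by case: (e _ _); ring.
rewrite sum_split (eq_bigr _ (fun p _ => hp p)) sumrB -mulr_suml count_sum.
rewrite (bigD1 j) //= big1 => [|p hpj]; last first.
  by rewrite dvj_val (negbTE hpj); case: (e _ _); rewrite ?mulr0.
rewrite /Td /Wd /sbcm_w h1 h2 !x0_val x0_z1 x0_z2 !dvj_z1 !dvj_z2 !dvj_val.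
rewrite !sub0r !subr0 opprK !omegaE HHN HdN /laplacianP hd eqxx.
by case: (i == j); case: (e _ _); ring.
Qed.

Lemma jacE (i j : pers z1 z2) :
  jacobianP e gamma delta (@xbar R V z1 z2) i j =
  (- HH 0 * @laplacianP R V e z1 z2 i j - 2 * (HH 1 + Hd 1) * (if i == j then 1 else 0))
   / (2 * HH 1 + d%:R * HH 0).
Proof.
rewrite /jacobianP.
have -> : (fun t => sbcm_f e gamma delta
      (full_state (fun k => @xbar R V z1 z2 k + (if k == j then t else 0))) (val i))
   = fun t => sbcm_f e gamma delta (Xs x0 (dvj j) t) (val i).
  by apply/funext => t; rewrite fs_eq.
have hD := der_f x0 (dvj j) (val i) (N0E i) (lt0r_neq0 (D0_gt0 i)).
rewrite derive1E derive_val.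
by rewrite TdE D0E.
Qed.

End Aux.

Lemma Hd1E (R : realType) (gamma delta : R) :
  Hd R gamma delta 1 = - 2 * gamma * HH R gamma delta 1 * (1 - HH R gamma delta 1).
Proof.
rewrite /Hd /HH.
have h : 1 + EE R gamma delta 1 != 0 by apply: lt0r_neq0; rewrite addr_gt0 // expR_gt0.
by field.
Qed.

Theorem theorem7 (R : realType) (V : finType) (e : rel V) (z1 z2 : V)
  (d : nat) (gamma delta : R) :
  symmetric e -> irreflexive e -> z1 != z2 ->
  (* G_P is d-regular *)
  (forall i : pers z1 z2, #|[set k : pers z1 z2 | e (val i) (val k)]| = d) ->
  (* every persuadable node is adjacent to both zealots *)
  (forall i : pers z1 z2, e (val i) z1 /\ e (val i) z2) ->
  0 <= gamma -> 0 <= delta ->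
  let u := omega gamma delta 0 in
  let v := omega gamma delta 1 in
  forall y : pers z1 z2 -> R,
    in_span (fun w => exists mu, 0 <= mu /\
               is_eigvec (jacobianP e gamma delta (@xbar R V z1 z2)) mu w) y
    <->
    in_span (fun w => exists lam,
               lam <= - (2 * v * (1 - 2 * gamma * (1 - v))) / u /\
               is_eigvec (@laplacianP R V e z1 z2) lam w) y.
Proof.
move=> _ _ z12 hd hz _ _ u v y.
have hu : u = HH R gamma delta 0 by rewrite /u -(omegaE R gamma delta 0) normr0.
have hv : v = HH R gamma delta 1 by rewrite /v -(omegaE R gamma delta 1) normr1.
have hc : 2 * v * (1 - 2 * gamma * (1 - v)) = 2 * (HH R gamma delta 1 + Hd R gamma delta 1).
  by rewrite hv Hd1E; ring.
rewrite hc hu.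
set h0 := HH R gamma delta 0.
set h1 := HH R gamma delta 1.
set c := 2 * (h1 + Hd R gamma delta 1).
set D := 2 * h1 + d%:R * h0.
have h0p : 0 < h0 by apply: HH_pos.
have h1p : 0 < h1 by apply: HH_pos.
have Dp : 0 < D by apply: ltr_wpDr; [apply: mulr_ge0 => //; apply: ltW| apply: mulr_gt0].
set J := jacobianP e gamma delta (@xbar R V z1 z2).
set L := @laplacianP R V e z1 z2.
pose a := - h0 / D.
pose b := - c / D.
have ha : a != 0.
  have h0n : h0 != 0 := lt0r_neq0 h0p. have Dn : D != 0 := lt0r_neq0 Dp.
  rewrite /a; apply: mulf_neq0; [rewrite oppr_eq0; exact: h0n | rewrite invr_eq0; exact: Dn].
have hJ : forall p (w : pers z1 z2 -> R),
    \sum_q J p q * w q = a * (\sum_q L p q * w q) + b * w p.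
  move=> p w.
  rewrite (eq_bigr (fun q => a * (L p q * w q) + b * ((if p == q then 1 else 0) * w q)));
    last first.
    move=> q _; rewrite /J (@jacE R gamma delta V e z1 z2 z12 d hd hz) -/h0 -/h1 -/c -/D /a /b /L.
    move: (laplacianP _ _ _ _) (if p == q then _ else _) (w q) => l0 dl wq. ring.
  rewrite big_split /= -!mulr_sumr; congr (_ + b * _).
  rewrite (bigD1 p) //= eqxx mul1r big1 ?addr0 // => q hq.
  by rewrite eq_sym (negbTE hq) mul0r.
have dir1 : forall w, (exists mu, 0 <= mu /\ is_eigvec J mu w) ->
    exists lam, lam <= - c / h0 /\ is_eigvec L lam w.
  move=> w [mu [hmu [hw hE]]].
  exists (- (mu * D + c) / h0); split.
    rewrite ler_pM2r; last by rewrite invr_gt0.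
    have : 0 <= mu * D by apply: mulr_ge0 => //; apply: ltW.
    lra.
  split => // p.
  have hX : a * (\sum_q L p q * w q) = mu * w p - b * w p by rewrite -hE hJ; ring.
  have -> : \sum_q L p q * w q = (a * (\sum_q L p q * w q)) / a by field.
  rewrite hX /a /b.
  have h0n : h0 != 0 by apply: lt0r_neq0.
  have Dn : D != 0 by apply: lt0r_neq0.
  by field; apply/andP; split; [exact: h0n|exact: Dn].
have dir2 : forall w, (exists lam, lam <= - c / h0 /\ is_eigvec L lam w) ->
    exists mu, 0 <= mu /\ is_eigvec J mu w.
  move=> w [lam [hlam [hw hE]]].
  exists (a * lam + b); split; last first.
    split; first exact: hw. by move=> p; rewrite hJ hE; ring.
  have h0n : h0 != 0 by apply: lt0r_neq0.
  have Dn : D != 0 by apply: lt0r_neq0.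
  have -> : a * lam + b = (- (h0 * lam) - c) / D by rewrite /a /b; field.
  apply: divr_ge0; last exact: ltW.
  move: hlam; rewrite -(ler_pM2r h0p).
  have -> : - c / h0 * h0 = - c by field.
  nra.
split => -[n [s [cf [hs hy]]]]; exists n, s, cf; split => // k.
  exact: dir1.
exact: dir2.
Qed.
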